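(* (i) For any $x\in\mathcal A$, the process $\{x^{-1}W_n\}_{n\ge0}$ under $P_x$ has the same distribution as the process $\{W_n\}_{n\ge0}$ under $P_{e_{\mathfrak t(x)}}$. (ii) For two words $w_1\neq w_2$ in $\mathcal A$, there is a positive-probability path of the Markov chain $\{W_n\}$ between $w_1$ and $w_2$ if and only if $w_1,w_2\in\mathcal A_i$ for some $1\le i\le N$. (iii) Suppose $\{v_n\}_{1\le n\le n'}$ is a positive-probability path of the chain with $v_1=w_1$ and $v_{n'}=w_2$, $w_1\neq w_2$, and let $w_1^{-1}w_2=\prod_{\ell=1}^d A_{i_\ell,j_\ell}^{(k_\ell)}$, $d\ge1$, be the reduced representation. Then there exist times $1<n_1<n_2<\dots<n_{d-1}<n'$ such that $v_{n_m}=w_1\prod_{\ell=1}^m A_{i_\ell,j_\ell}^{(k_\ell)}$ for each $1\le m\le d-1$.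
   Context: Fix an integer $N\ge 3$. Let $\mathcal G_N$ be the groupoid with object set $\{1,\dots,N\}$ generated by arrows $A_{i,j}^{(k)}$, $i\neq j\in\{1,\dots,N\}$, $k\in\{-1,1\}$, with source $\mathfrak s(A_{i,j}^{(k)})=i$ and target $\mathfrak t(A_{i,j}^{(k)})=j$, subject to the relations $A_{i,j}^{(k)}A_{j,\ell}^{(k)}=A_{i,\ell}^{(k)}$ for all $i,j,\ell$, $k$, with the convention $A_{i,i}^{(k)}:=e_i$ (the unit at object $i$). Composition $fg$ is defined when $\mathfrak t(f)=\mathfrak s(g)$, with source $\mathfrak s(f)$ and target $\mathfrak t(g)$. Let $\mathcal A$ be the arrow set and $\mathcal A_i=\{w\in\mathcal A:\mathfrak s(w)=i\}$. Every arrow has a unique reduced representation (a composition of generators to which the relations cannot be applied to decrease the number of generators), which is either empty ($e_i$) or of the form $A_{i_1,i_2}^{(k)}A_{i_2,i_3}^{(-k)}\cdots A_{i_d,i_{d+1}}^{((-1)^{d+1}k)}$ with $d\ge1$, $i_\ell\ne i_{\ell+1}$. Let $\{W_n\}_{n\ge0}$ be a Markov chain on $\mathcal A$ with $P(W_{n+1}=y\mid W_n=x)=p_{i,j}^{(k)}$ if $x^{-1}y=A_{i,j}^{(k)}$ with $i\neq j$, and $0$ otherwise, where $p_{i,j}^{(k)}\in(0,1)$ for all $i\ne j$, $k\in\{-1,1\}$, and $\sum_{j\neq i}\sum_{k=\pm1}p_{i,j}^{(k)}=1$ for each $i$. $P_x$ denotes the law of the chain started from $W_0=x$. A positive-probability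 path is a finite sequence of arrows in which each consecutive transition has positive probability. *)

(* Defs.v *)
From mathcomp Require Import all_boot all_order all_algebra.
Set Implicit Arguments. Unset Strict Implicit. Unset Printing Implicit Defensive.
Import Order.TTheory GRing.Theory Num.Theory.

(* The groupoid G_N, modelled by reduced representations (normal forms).
   Objects 1..N are represented by 'I_N.
   A generator A_{i,j}^{(k)} is the triple (i, j, k) with k : bool,
   true standing for k = 1 and false for k = -1.  *)

Section Groupoid.
Variable N : nat.

Definition gen := ('I_N * 'I_N * bool)%type.
Definition gsrc (g : gen) : 'I_N := g.1.1.
Definition gtgt (g : gen) : 'I_N := g.1.2.
Definition gkind (g : gen) : bool := g.2.
Definition is_gen (g : gen) : bool := gsrc g != gtgt g.

(* An arrow is given by its source and its reduced representation
   (a list of generators). *)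
Definition arrow := ('I_N * seq gen)%type.

Fixpoint red_from (c : 'I_N) (pk : option bool) (w : seq gen) : bool :=
  match w with
  | [::] => true
  | g :: t => [&& gsrc g == c, is_gen g,
                 (if pk is Some k then gkind g != k else true)
               & red_from (gtgt g) (Some (gkind g)) t]
  end.

Definition is_arrow (x : arrow) : bool := red_from x.1 None x.2.

Definition asrc (x : arrow) : 'I_N := x.1.
Definition atgt (x : arrow) : 'I_N := last x.1 (map gtgt x.2).

Definition unit_arrow (i : 'I_N) : arrow := (i, [::]).

Definition gen_arrow (g : gen) : arrow := (gsrc g, [:: g]).

(* append a generator to a reduced word stored in reverse order,
   applying the relations A^{(k)}_{i,j} A^{(k)}_{j,l} = A^{(k)}_{i,l}
   and A^{(k)}_{i,i} = e_i *)
Definition push (st : seq gen) (g : gen) : seq gen :=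
  match st with
  | h :: t => if gkind h == gkind g then
                (if gsrc h == gtgt g then t else (gsrc h, gtgt g, gkind g) :: t)
              else g :: st
  | [::] => [:: g]
  end.

(* composition fg (defined when t(f) = s(g); junk value f otherwise) *)
Definition acomp (x y : arrow) : arrow :=
  if atgt x == asrc y then (x.1, rev (foldl push (rev x.2) y.2)) else x.

(* inverse arrow: (A_{i,j}^{(k)})^{-1} = A_{j,i}^{(k)} *)
Definition ainv (x : arrow) : arrow :=
  (atgt x, rev (map (fun g : gen => (gtgt g, gsrc g, gkind g)) x.2)).

Section Chain.
Variable R : realFieldType.
Variable p : gen -> R.
Local Open Scope ring_scope.

Definition trans (x y : arrow) : R :=
  if asrc x == asrc y then
    (if (acomp (ainv x) y).2 is [:: g] then p g else 0)
  else 0.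

Fixpoint weight (x : arrow) (ys : seq arrow) : R :=
  match ys with
  | [::] => 1
  | y :: t => trans x y * weight y t
  end.

Definition step_cands (x : arrow) : seq arrow :=
  [seq acomp x (gen_arrow g) | g <- enum {: gen} & (gsrc g == atgt x) && is_gen g].

(* all candidate trajectories (W_0, ..., W_n) with W_0 = x (a finite
   superset of the support of the law of (W_0,...,W_n) under P_x) *)
Fixpoint cand_paths (n : nat) (x : arrow) : seq (seq arrow) :=
  match n with
  | 0 => [:: [:: x]]
  | n'.+1 => [seq x :: ys | y <- step_cands x, ys <- cand_paths n' y]
  end.

(* P_x((W_0, ..., W_n) \in B) *)
Definition prob_fdd (n : nat) (x : arrow) (B : pred (seq arrow)) : R :=
  \sum_(ys <- undup (cand_paths n x) | B ys) weight x (behead ys).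

Definition pos_path (v : seq arrow) : bool :=
  all is_arrow v &&
  (if v is a :: t then path (fun a b => 0 < trans a b) a t else false).

End Chain.
End Groupoid.

(* Main.v *)
Require Import Defs.
From mathcomp Require Import all_boot all_order all_algebra.
From mathcomp Require Import zify.
Set Implicit Arguments. Unset Strict Implicit. Unset Printing Implicit Defensive.
Import Order.TTheory GRing.Theory Num.Theory.

Lemma enter (T : eqType) (e : rel T) (Q Bp : pred T) (u : T) :
  (forall a b, Q a -> Q b -> e a b -> ~~ Bp a -> Bp b -> a = u) ->
  forall z0 zs, all Q (z0 :: zs) -> path e z0 zs -> ~~ Bp z0 -> Bp (last z0 zs) ->
  u \in z0 :: zs.
Proof.
move=> H z0 zs; elim: zs z0 => [|z zs IH] z0 /=.
  by move=> _ _ /negbTE ->.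
case/and3P=> Hq0 Hq Hall /andP [He Hp] Hb0 Hl.
case: (boolP (Bp z)) => Hbz.
  by rewrite (H z0 z) ?inE ?eqxx.
by rewrite inE IH ?orbT //= Hq.
Qed.

Lemma path_suffix (T : Type) (e : rel T) x s i : i <= size s -> path e x s ->
  path e (nth x (x :: s) i) (drop i s) /\ last (nth x (x :: s) i) (drop i s) = last x s.
Proof.
elim: s x i => [|y s IH] x [|i] //= Hi /andP [He Hp].
have [H1 H2] := IH y i Hi Hp.
by rewrite (set_nth_default y x) //= ltnS.
Qed.

Definition lastpos (T : eqType) (u : T) (vs : seq T) := size vs - index u (rev vs).

Lemma lastpos_nth (T : eqType) (x0 u : T) vs : u \in vs ->
  0 < lastpos u vs <= size vs /\ nth x0 vs (lastpos u vs).-1 = u.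
Proof.
move=> Hu.
have Hi : index u (rev vs) < size vs by rewrite -size_rev index_mem mem_rev.
split; first by rewrite /lastpos; lia.
have E : (lastpos u vs).-1 = size vs - (index u (rev vs)).+1 by rewrite /lastpos; lia.
rewrite E -nth_rev ?nth_index ?mem_rev //.
Qed.

Lemma lastpos_drop (T : eqType) (u : T) vs i : u \in drop i vs -> i < lastpos u vs.
Proof.
move=> Hu.
have E : rev vs = rev (drop i vs) ++ rev (take i vs) by rewrite -rev_cat cat_take_drop.
have Hi : index u (rev (drop i vs)) < size (drop i vs) by rewrite -size_rev index_mem mem_rev.
rewrite /lastpos E index_cat mem_rev Hu.
rewrite size_drop in Hi; lia.
Qed.

Lemma path_incr (f : nat -> nat) a b k n :
  (n = 0 -> a < b) -> (0 < n -> a < f k) ->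
  (forall j, k <= j -> j.+1 < k + n -> f j < f j.+1) ->
  (0 < n -> f (k + n).-1 < b) ->
  path ltn a (rcons (map f (iota k n)) b).
Proof.
elim: n a k => [|n IH] a k H0 H1 H2 H3 /=.
  by rewrite andbT H0.
rewrite H1 //=; apply: IH.
- move=> En; subst n; move: (H3 isT); rewrite addn1 //.
- move=> Hn; apply: H2; lia.
- move=> j Hj Hjn; apply: H2; lia.
- move=> Hn; move: (H3 isT); rewrite addSnnS //.
Qed.

Section Stk.
Variable N : nat.
Local Notation gen := (gen N).
Local Notation arrow := (arrow N).
Local Notation push := (@Defs.push N).

Definition tg (c : 'I_N) (st : seq gen) : 'I_N := head c (map (@gtgt N) st).

Fixpoint rs (c : 'I_N) (st : seq gen) : bool :=
  match st with
  | [::] => true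
  | h :: t => [&& is_gen h, gsrc h == tg c t,
                 (if t is h' :: _ then gkind h != gkind h' else true) & rs c t]
  end.

Fixpoint cw (c : 'I_N) (w : seq gen) : bool :=
  match w with
  | [::] => true
  | g :: t => [&& gsrc g == c, is_gen g & cw (gtgt g) t]
  end.

Definition swapg (g : gen) : gen := (gtgt g, gsrc g, gkind g).

Lemma swapgK : involutive swapg.
Proof. by case=> [[a b] k]. Qed.

Lemma red_from_cat c pk u v :
  red_from c pk (u ++ v) = red_from c pk u &&
    red_from (last c (map (@gtgt N) u)) (last pk (map (fun g => Some (gkind g)) u)) v.
Proof.
elim: u c pk => [|g u IH] c pk //=.
by rewrite IH !andbA.
Qed.

Lemma cw_cat c u v :
  cw c (u ++ v) = cw c u && cw (last c (map (@gtgt N) u)) v.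
Proof.
elim: u c => [|g u IH] c //=.
by rewrite IH !andbA.
Qed.

Lemma red_cw c pk w : red_from c pk w -> cw c w.
Proof.
elim: w c pk => [|g w IH] c pk //= /and4P [-> -> _ H] /=.
exact: IH H.
Qed.

Lemma head_map_rev c (s : seq gen) : head c (map (@gtgt N) (rev s)) = last c (map (@gtgt N) s).
Proof.
case/lastP: s => [|s x] //=.
by rewrite rev_rcons map_rcons last_rcons.
Qed.

Lemma rs_red c w : rs c (rev w) = red_from c None w.
Proof.
elim/last_ind: w => [|w g IH] //.
rewrite rev_rcons -cats1 red_from_cat /= -IH /tg head_map_rev andbT.
case/lastP: w IH => [|w h] IH /=.
  by rewrite !andbT andbC.
rewrite rev_rcons map_rcons last_rcons /=.
case: (rs c _); case: (is_gen g); case: (gsrc g == _); rewrite /= ?andbT ?andbF //.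
by rewrite map_rcons last_rcons /= andbC.
Qed.

Lemma last_map_rev c (s : seq gen) : last c (map (@gtgt N) (rev s)) = tg c s.
Proof. by rewrite -head_map_rev revK. Qed.

Lemma rs_cw c st : rs c st -> cw c (rev st).
Proof.
elim: st => [|h t IH] //= /and4P [H1 H2 _ H4].
by rewrite rev_cons -cats1 cw_cat IH //= last_map_rev -(eqP H2) eqxx H1.
Qed.

Lemma push_rs c st g : rs c st -> gsrc g = tg c st -> is_gen g ->
  rs c (push st g) /\ tg c (push st g) = gtgt g.
Proof.
case: st => [|h t] /=.
  by move=> _ -> ->; rewrite eqxx.
case/and4P=> Hh Hsh Hk Ht Hg Gg.
case: ifP => Hkk.
  case: ifP => Hs.
    by split=> //; rewrite -(eqP Hsh) (eqP Hs).
  rewrite /= /is_gen /= Hs Hsh Ht /= andbT; split=> //.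
  move: Hk; case: t {Hsh Ht Hg} => // h' t'; rewrite /gkind /= => H.
  by move: Hkk; rewrite /gkind => /eqP <-.
rewrite /= Gg Hg /=.
by rewrite eqxx eq_sym Hkk Hh Hsh Hk Ht.
Qed.

Lemma push_cons c st g : rs c (g :: st) -> push st g = g :: st.
Proof.
case: st => [|h t] //= /and4P [_ _ Hk _].
by rewrite eq_sym (negbTE Hk).
Qed.

Lemma push_cancel (u st : seq gen) : foldl push (map swapg u ++ st) u = st.
Proof.
elim: u st => [|g u IH] st //=.
by rewrite eqxx /= eqxx IH.
Qed.

Lemma push_red c pk (w st : seq gen) :
  red_from c pk w -> pk = (if st is h :: _ then Some (gkind h) else None) ->
  foldl push st w = rev w ++ st.
Proof.
elim: w c pk st => [|g w IH] c pk st //=.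
case/and4P=> _ _ Hk Hw Hpk.
have -> : push st g = g :: st.
  case: st Hpk => [|h t] //= Hpk; subst pk.
  by rewrite eq_sym (negbTE Hk).
by rewrite (IH _ _ _ Hw) // rev_cons cat_rcons.
Qed.

Lemma act_cw b X W : rs b X -> cw (tg b X) W ->
  rs b (foldl push X W) /\ tg b (foldl push X W) = last (tg b X) (map (@gtgt N) W).
Proof.
elim: W X => [|g W IH] X //= HX /and3P [Hs Hg HW].
have [H1 H2] := push_rs HX (eqP Hs) Hg.
by rewrite -H2; apply: IH => //; rewrite H2.
Qed.

Lemma act_rs b X c S : rs b X -> rs c S -> tg b X = c ->
  rs b (foldl push X (rev S)) /\ tg b (foldl push X (rev S)) = tg c S.
Proof.
move=> HX HS Ht.
have HW : cw (tg b X) (rev S) by rewrite Ht; apply: rs_cw.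
have [H1 H2] := act_cw HX HW.
by split=> //; rewrite H2 Ht last_map_rev.
Qed.

Lemma push_merge b Z h g : rs b Z -> tg b Z = gsrc h -> is_gen h -> is_gen g ->
  gtgt h = gsrc g -> gkind h = gkind g ->
  push (push Z h) g = if gsrc h == gtgt g then Z else push Z (gsrc h, gtgt g, gkind g).
Proof.
case: h => [[a b'] k]; case: g => [[b'' c'] k'].
rewrite /gsrc /gtgt /gkind /is_gen /= => HZ Ht Hh Hg Hb Hk; subst b'' k'.
case: Z HZ Ht => [|[[x y] kz] r] /=.
  by move=> _ _; rewrite eqxx; case: ifP.
case/and4P; rewrite /gsrc /gtgt /gkind /is_gen /tg /= => Hz Hxr Hkr Hr Hy.
move: Hh Hg Hz Hy; rewrite /gsrc /gtgt /= => Hh Hg Hz Hy; subst y.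
case: (eqVneq kz k) => [Ekz|Nkz].
  subst kz.
  case: (eqVneq x b') => [Exb|Nxb].
    subst x.
    have -> : push r (b', c', k) = (b', c', k) :: r.
      by case: r Hkr {Hxr Hr} => // h0 t /= Hk0; rewrite /gkind /= eq_sym (negbTE Hk0).
    case: (eqVneq a c') => [->|Nac] //=.
    by rewrite (negbTE Hg).
  rewrite /= /gkind /gsrc /gtgt /= eqxx.
  case: (eqVneq a c') => [Eac|Nac] //=.
  by subst c'; rewrite (negbTE Hz).
rewrite /= /gkind /gsrc /gtgt /= eqxx.
by case: (eqVneq a c') => [->|Nac].
Qed.

Lemma one_step b X c S g : rs b X -> rs c S -> tg b X = c ->
  gsrc g = tg c S -> is_gen g ->
  foldl push X (rev (push S g)) = push (foldl push X (rev S)) g.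
Proof.
move=> HX HS Ht Hs Hg.
case: S HS Hs => [|h t] HS Hs /=.
  by [].
have Ht' : rs c t by case/and4P: HS.
have Hh : is_gen h by case/and4P: HS.
have Hht : gsrc h = tg c t by case/and4P: HS => _ /eqP.
case: ifP => Hk.
  have [HZ HtZ] := act_rs HX Ht' Ht.
  have Hm := push_merge HZ (etrans HtZ (esym Hht)) Hh Hg (esym Hs) (eqP Hk).
  rewrite rev_cons foldl_rcons Hm.
  case: ifP => _ //.
  by rewrite rev_cons foldl_rcons.
by rewrite rev_cons foldl_rcons.
Qed.

Lemma push_assoc b X c S W : rs b X -> rs c S -> tg b X = c -> cw (tg c S) W ->
  foldl push X (rev (foldl push S W)) = foldl push X (rev S ++ W).
Proof.
elim: W S => [|g W IH] S HX HS Ht HW /=.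
  by rewrite cats0.
case/and3P: HW => Hs Hg HW.
have [HS' Ht'] := push_rs HS (eqP Hs) Hg.
rewrite IH //; last by rewrite Ht'.
by rewrite foldl_cat (one_step HX HS Ht (eqP Hs) Hg) -cat_rcons foldl_cat foldl_rcons.
Qed.

Lemma mapswapK (A : seq gen) : map swapg (map swapg A) = A.
Proof. by elim: A => [|g A IH] //=; rewrite swapgK IH. Qed.

Lemma ainvE (x : arrow) : ainv x = (atgt x, rev (map swapg x.2)).
Proof. by []. Qed.

Lemma atgt_tg (x : arrow) : atgt x = tg x.1 (rev x.2).
Proof. by rewrite /tg head_map_rev. Qed.

Lemma arrow_rs (x : arrow) : is_arrow x = rs x.1 (rev x.2).
Proof. by rewrite rs_red. Qed.

Lemma inv_rs c pk A : red_from c pk A ->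
  rs (last c (map (@gtgt N) A)) (map swapg A) /\
  tg (last c (map (@gtgt N) A)) (map swapg A) = c.
Proof.
elim: A c pk => [|g A IH] c pk //=.
case/and4P=> Hs Hg Hk HA.
have [H1 H2] := IH _ _ HA.
rewrite H1 H2 eqxx andbT /is_gen /swapg /=; split; last by rewrite (eqP Hs).
have -> : gsrc (gtgt g, gsrc g, gkind g) != gtgt (gtgt g, gsrc g, gkind g) by rewrite /gsrc /gtgt /= eq_sym.
by case: A HA {IH H1 H2} => // g' A' /= /and4P [_ _ Hk' _]; rewrite /gkind /= eq_sym.
Qed.

Lemma atgt_ainv (x : arrow) : is_arrow x -> atgt (ainv x) = x.1.
Proof.
move=> Hx; rewrite ainvE /atgt /= last_map_rev.
by have [_ ->] := inv_rs Hx.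
Qed.

Definition Dm (A B : seq gen) := foldl push (map swapg A) B.

Lemma phiE (x y : arrow) : is_arrow x -> y.1 = x.1 ->
  acomp (ainv x) y = (atgt x, rev (Dm x.2 y.2)).
Proof.
move=> Hx Hy; rewrite /acomp atgt_ainv // /asrc Hy eqxx.
by rewrite ainvE /= revK.
Qed.

Lemma recover (x y : arrow) : is_arrow x -> is_arrow y -> y.1 = x.1 ->
  foldl push (rev x.2) (rev (Dm x.2 y.2)) = rev y.2.
Proof.
move=> Hx Hy Hyx.
have [H1 H2] := inv_rs Hx.
rewrite /Dm (push_assoc (b := x.1) (c := atgt x)) //.
- rewrite foldl_cat.
  have := push_cancel (rev (map swapg x.2)) [::].
  rewrite cats0 map_rev mapswapK => ->.
  by rewrite (push_red (c := y.1) (pk := None)) ?cats0.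
- by rewrite -arrow_rs.
- by rewrite -atgt_tg.
- by rewrite H2 -Hyx; apply: (red_cw (pk := None)).
Qed.

Lemma Dm_rs (x y : arrow) : is_arrow x -> is_arrow y -> y.1 = x.1 ->
  rs (atgt x) (Dm x.2 y.2) /\ tg (atgt x) (Dm x.2 y.2) = atgt y.
Proof.
move=> Hx Hy Hyx.
have [H1 H2] := inv_rs Hx.
have := @act_cw (atgt x) (map swapg x.2) y.2 H1.
rewrite H2 -Hyx => H; have [] := H (red_cw Hy).
by move=> -> ->.
Qed.

Lemma Dm_char (x y : arrow) g : is_arrow x -> is_arrow y -> y.1 = x.1 ->
  Dm x.2 y.2 = [:: g] <-> [/\ is_gen g, gsrc g = atgt x & rev y.2 = push (rev x.2) g].
Proof.
move=> Hx Hy Hyx; split.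
  move=> HD.
  have [H1 _] := Dm_rs Hx Hy Hyx.
  rewrite HD /= andbT in H1; case/andP: H1 => Hg /eqP Hs.
  by split=> //; rewrite -(recover Hx Hy Hyx) HD.
case=> Hg Hs Hy2.
have [H1 H2] := inv_rs Hx.
rewrite /Dm -[y.2]revK Hy2.
have -> : push (rev x.2) g = foldl push (rev x.2) [:: g] by [].
rewrite (push_assoc (b := atgt x) (c := x.1)) //.
- rewrite revK foldl_cat.
  have := push_cancel x.2 [::]; rewrite cats0 => -> //.
- by rewrite -arrow_rs.
- by rewrite -atgt_tg /= Hs eqxx Hg.
Qed.

Lemma phi_arrow (x a : arrow) : is_arrow x -> is_arrow a -> a.1 = x.1 ->
  is_arrow (acomp (ainv x) a) /\ atgt (acomp (ainv x) a) = atgt a.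
Proof.
move=> Hx Ha Hax; rewrite phiE // arrow_rs /= revK; split.
  by case: (Dm_rs Hx Ha Hax).
have [H1 H2] := Dm_rs Hx Ha Hax.
by rewrite atgt_tg /= revK.
Qed.

Lemma phi_push (x a : arrow) g : is_arrow x -> is_arrow a -> a.1 = x.1 ->
  is_gen g -> gsrc g = atgt a ->
  (Dm x.2 (rev (push (rev a.2) g)) = push (Dm x.2 a.2) g).
Proof.
move=> Hx Ha Hax Hg Hs.
have [H1 H2] := inv_rs Hx.
have -> : push (rev a.2) g = foldl push (rev a.2) [:: g] by [].
rewrite /Dm (push_assoc (b := atgt x) (c := x.1)) //.
- by rewrite revK foldl_cat.
- by rewrite -Hax -arrow_rs.
- by rewrite -Hax -atgt_tg /= Hs eqxx Hg.
Qed.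

Lemma phi_push_inv (x a b : arrow) g : is_arrow x -> is_arrow a -> is_arrow b ->
  a.1 = x.1 -> b.1 = x.1 -> is_gen g -> gsrc g = atgt a ->
  Dm x.2 b.2 = push (Dm x.2 a.2) g -> rev b.2 = push (rev a.2) g.
Proof.
move=> Hx Ha Hb Hax Hbx Hg Hs HD.
rewrite -(recover Hx Hb Hbx) HD.
have [H1 H2] := Dm_rs Hx Ha Hax.
have -> : push (Dm x.2 a.2) g = foldl push (Dm x.2 a.2) [:: g] by [].
rewrite (push_assoc (b := x.1) (c := atgt x)) //.
- by rewrite foldl_cat (recover Hx Ha Hax).
- by rewrite -arrow_rs.
- by rewrite -atgt_tg.
- by rewrite H2 /= Hs eqxx Hg.
Qed.

Lemma phi_inj (x a b : arrow) : is_arrow x -> is_arrow a -> is_arrow b ->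
  a.1 = x.1 -> b.1 = x.1 -> acomp (ainv x) a = acomp (ainv x) b -> a = b.
Proof.
move=> Hx Ha Hb Hax Hbx; rewrite !phiE // => -[] /(congr1 rev); rewrite !revK => HD.
have := recover Hx Ha Hax; rewrite HD (recover Hx Hb Hbx) => /(congr1 rev); rewrite !revK.
by case: a b Hax Hbx {Ha Hb HD} => [a1 a2] [b1 b2] /= -> -> ->.
Qed.

Section Chain.
Variable R : realFieldType.
Variable p : gen -> R.
Local Open Scope ring_scope.

Definition sing (D : seq gen) : R := if D is [:: g] then p g else 0.

Lemma sing_rev D : (if rev D is [:: g] then p g else 0) = sing D.
Proof.
case: D => [|a [|b D]] //.
move: (rev [:: a, b & D]) (size_rev [:: a, b & D]) => r.
by case: r => [|u [|v r']].
Qed.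

Lemma transE (x y : arrow) : is_arrow x ->
  trans p x y = if asrc x == asrc y then sing (Dm x.2 y.2) else 0.
Proof.
move=> Hx; rewrite /trans; case: eqP => // Hxy.
by rewrite phiE // sing_rev.
Qed.

Lemma sing_eq D1 D2 : (forall g, D1 = [:: g] <-> D2 = [:: g]) -> sing D1 = sing D2.
Proof.
move=> H.
case E1: D1 => [|g [|g' D]].
- case E2: D2 => [|g [|g' D]] //.
  by have := (proj2 (H g)) E2; rewrite E1.
- by rewrite (proj1 (H g)) // E1.
- case E2: D2 => [|g0 [|g1 D']] //.
  by have := (proj2 (H g0)) E2; rewrite E1.
Qed.

Lemma trans_inv (x a b : arrow) : is_arrow x -> is_arrow a -> is_arrow b ->
  a.1 = x.1 -> b.1 = x.1 ->
  trans p (acomp (ainv x) a) (acomp (ainv x) b) = trans p a b.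
Proof.
move=> Hx Ha Hb Hax Hbx.
have [Ha' Hta'] := phi_arrow Hx Ha Hax.
have [Hb' Htb'] := phi_arrow Hx Hb Hbx.
rewrite (transE _ Ha') (transE _ Ha).
have Eb : (acomp (ainv x) b).1 = (acomp (ainv x) a).1 by rewrite !phiE.
have -> : asrc (acomp (ainv x) a) == asrc (acomp (ainv x) b) by rewrite /asrc Eb.
have -> : asrc a == asrc b by rewrite /asrc Hax Hbx.
apply: sing_eq => g.
apply: (iff_trans (Dm_char g Ha' Hb' Eb)); apply: iff_sym.
apply: (iff_trans (Dm_char g Ha Hb (etrans Hbx (esym Hax)))); apply: iff_sym.
rewrite Hta'.
rewrite !phiE //= !revK.
split; case=> Hg Hs H; split=> //.
  exact: (phi_push_inv Hx Ha Hb Hax Hbx Hg Hs).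
by rewrite -(phi_push Hx Ha Hax Hg Hs) -H revK.
Qed.

Lemma acomp_gen (y : arrow) g : gsrc g = atgt y ->
  acomp y (gen_arrow g) = (y.1, rev (push (rev y.2) g)).
Proof. by move=> Hs; rewrite /acomp /asrc /= Hs eqxx. Qed.

Lemma step_arrow (y : arrow) z : is_arrow y -> z \in step_cands y ->
  is_arrow z /\ z.1 = y.1.
Proof.
move=> Hy /mapP [g]; rewrite mem_filter => /andP [/andP [/eqP Hs Hg] _] ->.
rewrite acomp_gen // arrow_rs /= revK; split=> //.
have [] := push_rs (_ : rs y.1 (rev y.2)) (_ : gsrc g = tg y.1 (rev y.2)) Hg => //.
- by rewrite -arrow_rs.
- by rewrite -atgt_tg.
Qed.

Lemma step_phi (x y : arrow) : is_arrow x -> is_arrow y -> y.1 = x.1 ->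
  step_cands (acomp (ainv x) y) = map (acomp (ainv x)) (step_cands y).
Proof.
move=> Hx Hy Hyx.
have [Hy' Ht'] := phi_arrow Hx Hy Hyx.
rewrite /step_cands Ht'.
rewrite -map_comp.
apply/eq_in_map => g.
rewrite mem_filter => /andP [/andP [/eqP Hs Hg] _] /=.
rewrite acomp_gen ?Ht' // acomp_gen // phiE //= phiE //= revK.
by rewrite phi_push.
Qed.

Lemma cand_shape n (y : arrow) ys : is_arrow y -> ys \in cand_paths n y ->
  ys = y :: behead ys /\ all (fun z => is_arrow z && (z.1 == y.1)) ys.
Proof.
elim: n y ys => [|n IH] y ys Hy /=.
  by rewrite inE => /eqP -> /=; rewrite Hy eqxx.
case/flatten_mapP => z Hz /mapP [zs Hzs ->] /=; split=> //.
have [Hz1 Hz2] := step_arrow Hy Hz.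
have [_ Hall] := IH z zs Hz1 Hzs.
rewrite Hy eqxx /=; apply/allP => w Hw.
by have /andP [-> /eqP ->] := allP Hall w Hw; rewrite Hz2 eqxx.
Qed.

Lemma cand_phi n (x y : arrow) : is_arrow x -> is_arrow y -> y.1 = x.1 ->
  cand_paths n (acomp (ainv x) y) = map (map (acomp (ainv x))) (cand_paths n y).
Proof.
elim: n y => [|n IH] y Hx Hy Hyx //=.
rewrite step_phi // map_flatten -!map_comp.
congr flatten; apply/eq_in_map => g Hg /=.
have Hz : acomp y (gen_arrow g) \in step_cands y by apply: map_f.
have [Hz1 Hz2] := step_arrow Hy Hz.
rewrite IH //; last by rewrite Hz2.
by rewrite -!map_comp.
Qed.

Lemma weight_inv (x y : arrow) ys : is_arrow x ->
  all (fun z => is_arrow z && (z.1 == x.1)) (y :: ys) ->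
  weight p (acomp (ainv x) y) (map (acomp (ainv x)) ys) = weight p y ys.
Proof.
move=> Hx.
elim: ys y => [|z ys IH] y //= /and3P [/andP [Hy /eqP Hyx] /andP [Hz /eqP Hzx] Hall].
rewrite trans_inv // IH //=.
by rewrite Hz Hzx eqxx.
Qed.

End Chain.

Lemma phi_self (x : arrow) : is_arrow x -> acomp (ainv x) x = unit_arrow (atgt x).
Proof.
move=> Hx; rewrite phiE //.
by have := push_cancel x.2 [::]; rewrite cats0 /Dm => ->.
Qed.

Lemma undup_map_in (T1 T2 : eqType) (f : T1 -> T2) (s : seq T1) :
  {in s &, injective f} -> undup (map f s) = map f (undup s).
Proof.
elim: s => [|a s IH] //= Hinj.
have Hinj' : {in s &, injective f}.
  by move=> u v Hu Hv; apply: Hinj; rewrite inE ?Hu ?Hv orbT.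
have -> : (f a \in map f s) = (a \in s).
  apply/mapP/idP => [[b Hb Eb]|Ha]; last by exists a.
  by rewrite (Hinj a b) // ?inE ?eqxx ?Hb ?orbT.
by case: ifP => _; rewrite IH.
Qed.

Lemma map_inj_all (T1 T2 : eqType) (P : pred T1) (f : T1 -> T2) (s1 s2 : seq T1) :
  {in P &, injective f} -> all P s1 -> all P s2 -> map f s1 = map f s2 -> s1 = s2.
Proof.
move=> Hinj; elim: s1 s2 => [|a s1 IH] [|b s2] //= /andP [Ha H1] /andP [Hb H2] [Eab E].
by rewrite (Hinj a b) // (IH s2).
Qed.



Lemma part1 (R : realFieldType) (p : gen -> R) (x : arrow) : is_arrow x ->
  forall (n : nat) (B : pred (seq arrow)),
    prob_fdd p n x (fun ys => B (map (acomp (ainv x)) ys))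
    = prob_fdd p n (unit_arrow (atgt x)) B.
Proof.
move=> Hx n B; rewrite /prob_fdd -(phi_self Hx) cand_phi // undup_map_in.
  rewrite big_map.
  rewrite [LHS]big_seq_cond [RHS]big_seq_cond; apply: eq_bigr => ys /andP [+ _]; rewrite mem_undup => Hys.
  have [E Hall] := cand_shape Hx Hys.
  rewrite E /= weight_inv //.
  by rewrite -E.
move=> u v Hu Hv.
have [_ Hau] := cand_shape Hx Hu.
have [_ Hav] := cand_shape Hx Hv.
apply: map_inj_all Hau Hav.
by move=> a b /andP [Ha /eqP Hax] /andP [Hb /eqP Hbx]; apply: phi_inj.
Qed.


Lemma prefix_arrow (s : 'I_N) A m : is_arrow (s, A) -> is_arrow (s, take m A).
Proof.
rewrite /is_arrow /= -{1}(cat_take_drop m A) red_from_cat.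
by case/andP.
Qed.

Lemma trans_src (R : realFieldType) (p : gen -> R) a b : (0 < trans p a b)%R -> asrc a = asrc b.
Proof. by rewrite /trans; case: eqP => // _; rewrite ltxx. Qed.

Lemma rcons_steps (R : realFieldType) (p : gen -> R) (hp : forall g, is_gen g -> (0 < p g)%R)
  (s : 'I_N) u h : is_arrow (s, u) -> is_arrow (s, rcons u h) ->
  (0 < trans p (s, u) (s, rcons u h))%R /\ (0 < trans p (s, rcons u h) (s, u))%R.
Proof.
move=> Ha Hb.
have Hrs : rs s (h :: rev u) by rewrite -rev_rcons -[s]/((s, rcons u h).1) -arrow_rs.
have Hh : is_gen h by case/and4P: Hrs.
have Hsh : gsrc h = atgt (s, u) by rewrite atgt_tg; case/and4P: Hrs => _ /eqP.
split.
  rewrite transE // /asrc eqxx.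
  have -> : Dm (s, u).2 (s, rcons u h).2 = [:: h].
    apply/(Dm_char _ Ha Hb) => //; split=> //=.
    by rewrite rev_rcons (push_cons Hrs).
  exact: hp.
rewrite transE // /asrc eqxx.
have Hg : is_gen (swapg h) by rewrite /is_gen /swapg /gsrc /gtgt /= eq_sym.
have -> : Dm (s, rcons u h).2 (s, u).2 = [:: swapg h].
  apply/(Dm_char _ Hb Ha) => //; split=> //=.
    by rewrite /atgt /= map_rcons last_rcons.
  by rewrite rev_rcons /= /swapg /gkind /gsrc /gtgt /= !eqxx.
exact: hp.
Qed.

Lemma path_iota_map (T : Type) (r : T -> T -> bool) (f : nat -> T) k n :
  (forall j, k <= j -> j < k + n -> r (f j) (f j.+1)) ->
  path r (f k) (map f (iota k.+1 n)).
Proof.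
elim: n k => [|n IH] k H //=.
rewrite H ?leqnn ?addnS ?ltnS ?leq_addr //=.
apply: IH => j Hj Hjn; apply: H; first exact: ltnW.
by rewrite addnS -addSn.
Qed.

Lemma last_iota_map (T : Type) (f : nat -> T) k n :
  last (f k) (map f (iota k.+1 n)) = f (k + n).
Proof.
elim: n k => [|n IH] k /=; first by rewrite addn0.
by rewrite IH addnS.
Qed.

Lemma part2 (R : realFieldType) (p : gen -> R) (hp : forall g, is_gen g -> (0 < p g)%R)
  (w1 w2 : arrow) : is_arrow w1 -> is_arrow w2 -> w1 <> w2 ->
  (exists t : seq arrow, pos_path p (w1 :: t) /\ last w1 t = w2)
  <-> (exists i : 'I_N, asrc w1 = i /\ asrc w2 = i).
Proof.
move=> H1 H2 Hne; split.
  case=> t [/andP [_ Hp] Hl]; exists (asrc w1); split=> //.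
  rewrite -Hl; elim: t w1 Hp {H1 Hne Hl} => [|z t IH] w1 //= /andP [Hz Hp].
  by rewrite (trans_src Hz) IH.
case=> i [E1 E2].
case: w1 w2 H1 H2 Hne E1 E2 => s A [s' B] H1 H2 Hne E1 E2.
rewrite /asrc /= in E1 E2; subst s s'.
pose f j := if j <= size A then (i, take (size A - j) A) else (i, take (j - size A) B).
have Hf : forall j, is_arrow (f j).
  by move=> j; rewrite /f; case: ifP => _; apply: prefix_arrow.
exists (map f (iota 1 (size A + size B))); split.
  rewrite /pos_path.
  have -> : (i, A) = f 0 by rewrite /f leq0n subn0 take_size.
  apply/andP; split.
    by rewrite /= Hf /=; apply/allP => z /mapP [j _ ->].
  have h0 : gen := (i, i, true).
  apply: path_iota_map => j _ Hj.
  case: (ltnP j (size A)) => HjA.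
    have E1 : f j = (i, take (size A - j.+1).+1 A).
      by rewrite /f (ltnW HjA) subnSK.
    have E2 : f j.+1 = (i, take (size A - j.+1) A) by rewrite /f HjA.
    have Hk : size A - j.+1 < size A by rewrite ltn_subrL (leq_ltn_trans _ HjA).
    rewrite E1 E2 (take_nth h0 Hk).
    apply: (rcons_steps hp _ _).2; last by rewrite -(take_nth h0 Hk); apply: prefix_arrow.
    exact: prefix_arrow.
  have E1 : f j = (i, take (j - size A) B).
    rewrite /f; case: ifP => // Hj'.
    have Ej : j = size A by apply/eqP; rewrite eqn_leq Hj' HjA.
    by rewrite Ej subnn !take0.
  have Hk : j - size A < size B by rewrite ltn_subLR // addnC.
  have E2 : f j.+1 = (i, take (j - size A).+1 B).
    by rewrite /f leqNgt ltnS HjA /= subSn.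
  rewrite E1 E2 (take_nth h0 Hk).
  apply: (rcons_steps hp _ _).1; last by rewrite -(take_nth h0 Hk); apply: prefix_arrow.
  exact: prefix_arrow.
rewrite (_ : (i, A) = f 0); last by rewrite /f leq0n subn0 take_size.
rewrite last_iota_map add0n /f.
case: ifP => H.
  have EB : size B = 0 by move: H; rewrite -{2}[size A]addn0 leq_add2l leqn0 => /eqP.
  have -> : B = [::] by apply/eqP; rewrite -size_eq0 EB.
  by rewrite /= addn0 subnn take0.
by rewrite addKn take_size.
Qed.

End Stk.

Section Core.
Variable N : nat.
Local Notation gen := (gen N).
Local Notation arrow := (arrow N).
Local Notation push := (@Defs.push N).
Variable R : realFieldType.
Variable p : gen -> R.

Lemma push_shape (S : seq gen) g :
  push S g = g :: S \/ exists h t h', S = h :: t /\ (push S g = t \/ push S g = h' :: t).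
Proof.
case: S => [|h t] /=; first by left.
case: ifP => _; last by left.
right; exists h, t, (gsrc h, gtgt g, gkind g); split=> //.
by case: ifP => _; [left|right].
Qed.

Lemma trans_step (a b : arrow) : is_arrow a -> is_arrow b -> (0 < trans p a b)%R ->
  a.1 = b.1 /\ exists g, rev b.2 = push (rev a.2) g.
Proof.
move=> Ha Hb Ht.
have Es := trans_src Ht.
split=> //.
move: Ht; rewrite transE // Es eqxx.
case E: (Dm a.2 b.2) => [|g [|g' D]]; rewrite /sing ?ltxx //.
move/(Dm_char _ Ha Hb (esym Es)): E => [_ _ H] _.
by exists g.
Qed.

Definition Bm (c : 'I_N) (W : seq gen) (m : nat) (z : arrow) :=
  [&& z.1 == c, take m z.2 == take m W & m < size z.2].

Lemma take_rcons_le (u : seq gen) x m : m <= size u -> take m (rcons u x) = take m u.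
Proof. by move=> H; rewrite -cats1 takel_cat. Qed.

Lemma step_B c W m (a b : arrow) : 0 < m -> is_arrow a -> is_arrow b ->
  (0 < trans p a b)%R -> ~~ Bm c W m a -> Bm c W m b -> a = (c, take m W).
Proof.
move=> Hm Ha Hb Ht Hna /and3P [/eqP Hbc /eqP Htk Hsz].
have [Eab [g Hg]] := trans_step Ha Hb Ht.
have Hac : a.1 = c by rewrite Eab.
have Hna' : ~~ ((take m a.2 == take m W) && (m < size a.2)).
  by move: Hna; rewrite /Bm Hac eqxx.
case: (push_shape (rev a.2) g) => [E|[h [t [h' [E1 [E2|E2]]]]]].
- have Eb : b.2 = rcons a.2 g by rewrite -[b.2]revK Hg E rev_cons revK.
  rewrite Eb size_rcons ltnS in Hsz.
  case: (ltnP m (size a.2)) => Hm2.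
    by move: Hna'; rewrite -Htk Eb take_rcons_le ?(ltnW Hm2) // eqxx Hm2.
  have Em : m = size a.2 by apply/eqP; rewrite eqn_leq Hsz Hm2.
  move: Htk; rewrite Eb -cats1 takel_cat ?Em ?leqnn // take_size => Ea.
  by case: a {Ha Ht Hna Hna' Hg E Eab Eb Hsz Hm2 Em} Hac Ea => a1 a2 /= -> {1}->.
- have Ea : a.2 = rcons (rev t) h by rewrite -[a.2]revK E1 rev_cons.
  have Eb : b.2 = rev t by rewrite -[b.2]revK Hg E2.
  move: Hna'; rewrite Ea take_rcons_le -?Eb ?Htk ?eqxx ?size_rcons /=; last exact: ltnW.
  by rewrite (ltn_trans Hsz).
- have Ea : a.2 = rcons (rev t) h by rewrite -[a.2]revK E1 rev_cons.
  have Eb : b.2 = rcons (rev t) h' by rewrite -[b.2]revK Hg E2 rev_cons.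
  rewrite Eb size_rcons ltnS in Hsz.
  move: Hna'; rewrite Ea size_rcons ltnS Hsz andbT.
  case: (ltnP m (size (rev t))) => Hm2.
    by rewrite take_rcons_le ?(ltnW Hm2) // -Htk Eb take_rcons_le ?(ltnW Hm2) // eqxx.
  have Em : m = size (rev t) by apply/eqP; rewrite eqn_leq Hsz Hm2.
  by rewrite take_rcons_le ?Em ?leqnn // -Em -Htk Eb take_rcons_le ?Em ?leqnn // eqxx.
Qed.

Lemma core (c : 'I_N) (W : seq gen) (zs : seq arrow) : 0 < size W -> all (@is_arrow N) ((c, [::]) :: zs) ->
  path (fun a b => (0 < trans p a b)%R) (c, [::]) zs -> last (c, [::]) zs = (c, W) ->
  exists ns : seq nat, size ns = (size W).-1 /\
    path ltn 1 (rcons ns (size zs).+1) /\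
    forall m, m < (size W).-1 -> (nth 0 ns m).-1 < (size zs).+1 /\
      nth (c, [::]) ((c, [::]) :: zs) (nth 0 ns m).-1 = (c, take m.+1 W).
Proof.
move=> HW Hall Hp Hl.
set z0 : arrow := (c, [::]).
set vs := z0 :: zs.
have Hsv : size vs = (size zs).+1 by [].
have Huinj : forall a b, (c, take a W) = (c, take b W) -> minn a (size W) = minn b (size W).
  by move=> a b /(congr1 (fun z : arrow => size z.2)) /=; rewrite !size_take_min.
have Hin : forall m i, 0 < m < size W -> i < size vs -> ~~ Bm c W m (nth z0 vs i) ->
    (c, take m W) \in drop i vs.
  move=> m i /andP [Hm1 Hm2] Hi Hnb.
  rewrite (drop_nth z0 Hi).
  have [Hp' Hl'] := @path_suffix _ _ z0 zs i Hi Hp.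
  apply: (enter (e := fun a b => (0 < trans p a b)%R) (Q := @is_arrow N) (Bp := Bm c W m)).
  - by move=> a b Qa Qb Hab Hna Hb; exact: (@step_B c W m a b Hm1 Qa Qb Hab Hna Hb).
  - rewrite -drop_nth //; apply/allP => z /mem_drop Hz; exact: (allP Hall).
  - exact: Hp'.
  - exact: Hnb.
  - by rewrite /= Hl' Hl /Bm /= !eqxx Hm2.
pose pos m := lastpos (c, take m W) vs.
have Hpos : forall m, 0 < m < size W ->
    0 < pos m <= size vs /\ nth z0 vs (pos m).-1 = (c, take m W).
  move=> m Hm; apply: lastpos_nth.
  have := Hin m 0 Hm isT.
  by rewrite drop0; apply; rewrite /Bm /= ltn0 !andbF.
have Hsz : forall m, m <= size W -> size (take m W) = m by move=> m Hm; rewrite size_takel.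
have Hnb : forall m m', m <= m' -> m' <= size W -> ~~ Bm c W m' (c, take m W).
  by move=> m m' H1 H2; rewrite /Bm /= Hsz ?(leq_trans H1) // ltnNge H1 !andbF.
exists (map pos (iota 1 (size W).-1)); split; first by rewrite size_map size_iota.
split.
  rewrite -Hsv; apply: path_incr.
  - move=> H0.
    rewrite Hsv ltnS lt0n size_eq0; apply/eqP => E.
    move: Hl; rewrite E /= => /(congr1 (fun z : arrow => size z.2)) /= E0.
    by rewrite -E0 in HW.
  - move=> Hn.
    have Hm : 0 < 1 < size W by rewrite /=; lia.
    have [/andP [H1 H2] H3] := Hpos 1 Hm.
    rewrite ltn_neqAle H1 andbT; apply/eqP => E.
    move: H3; rewrite -E /= => /(congr1 (fun z : arrow => size z.2)) /=.
    by rewrite Hsz //; lia.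
  - move=> j Hj Hjn.
    have Hm : 0 < j < size W by apply/andP; split; lia.
    have Hm' : 0 < j.+1 < size W by apply/andP; split; lia.
    have [/andP [H1 H2] H3] := Hpos j Hm.
    have [/andP [H1' H2'] H3'] := Hpos j.+1 Hm'.
    have Hd : (c, take j.+1 W) \in drop (pos j).-1 vs.
      apply: Hin => //; first by lia.
      by rewrite H3; apply: Hnb; lia.
    have Hlt := lastpos_drop Hd.
    have Hne : pos j != pos j.+1.
      apply/eqP => E; move: H3'; rewrite -E H3 => /Huinj; lia.
    rewrite -/(pos j.+1) in Hlt; lia.
  - move=> Hn.
    have Hm : 0 < (1 + (size W).-1).-1 < size W by apply/andP; split; lia.
    have [/andP [H1 H2] H3] := Hpos _ Hm.
    rewrite ltn_neqAle H2 andbT; apply/eqP => E.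
    move: H3; rewrite E nth_last /= Hl -{1}(take_size W) => /Huinj; lia.
move=> m Hm.
rewrite (nth_map 0) ?size_iota // nth_iota // add1n.
have Hm' : 0 < m.+1 < size W by apply/andP; split; lia.
have [/andP [H1 H2] H3] := Hpos _ Hm'.
split=> //; lia.
Qed.

End Core.

Section Fin.
Variable N : nat.
Local Notation gen := (gen N).
Local Notation arrow := (arrow N).
Local Notation push := (@Defs.push N).

Lemma phi_acomp (x : arrow) T : is_arrow x -> red_from (atgt x) None T ->
  [/\ is_arrow (acomp x (atgt x, T)), (acomp x (atgt x, T)).1 = x.1 &
      acomp (ainv x) (acomp x (atgt x, T)) = (atgt x, T)].
Proof.
move=> Hx HT.
have E : acomp x (atgt x, T) = (x.1, rev (foldl push (rev x.2) T)).
  by rewrite /acomp /asrc /= eqxx.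
have Hrs : rs x.1 (rev x.2) by rewrite -arrow_rs.
have Hcw : cw (tg x.1 (rev x.2)) T by rewrite -atgt_tg; apply: red_cw HT.
have [H1 H2] := act_cw Hrs Hcw.
have Ha : is_arrow (acomp x (atgt x, T)) by rewrite E arrow_rs /= revK.
split=> //; first by rewrite E.
rewrite phiE ?E //= /Dm.
have [I1 I2] := inv_rs Hx.
rewrite (push_assoc (b := atgt x) (c := x.1)) //.
- rewrite revK foldl_cat.
  have := push_cancel x.2 [::]; rewrite cats0 => ->.
  by rewrite (push_red (c := atgt x) (pk := None)) // cats0 revK.
Qed.

Lemma path_src (R : realFieldType) (p : gen -> R) (x : arrow) t :
  path (fun a b => (0 < trans p a b)%R) x t -> forall z, z \in x :: t -> asrc z = asrc x.
Proof.
elim: t x => [|y t IH] x /=.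
  by move=> _ z; rewrite inE => /eqP ->.
case/andP=> Hxy Hp z; rewrite inE => /orP [/eqP -> //|Hz].
by rewrite (IH y Hp z Hz) (trans_src Hxy).
Qed.

Lemma path_phi (R : realFieldType) (p : gen -> R) (x y : arrow) ys : is_arrow x ->
  all (fun z => is_arrow z && (z.1 == x.1)) (y :: ys) ->
  path (fun a b => (0 < trans p a b)%R) y ys ->
  path (fun a b => (0 < trans p a b)%R) (acomp (ainv x) y) (map (acomp (ainv x)) ys).
Proof.
move=> Hx; elim: ys y => [|z ys IH] y //=.
case/and3P=> /andP [Hy /eqP Hyx] /andP [Hz /eqP Hzx] Hall /andP [Ht Hp].
rewrite trans_inv // Ht /=; apply: IH => //=.
by rewrite Hz Hzx eqxx.
Qed.

End Fin.

Local Open Scope ring_scope.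
Theorem lemma2p2 (N : nat) (hN : (3 <= N)%N) (R : realFieldType)
  (p : gen N -> R)
  (hp : forall g : gen N, is_gen g -> 0 < p g < 1)
  (hsum : forall i : 'I_N,
      \sum_(g : gen N | (gsrc g == i) && is_gen g) p g = 1) :
  (* (i) *)
  (forall x : arrow N, is_arrow x ->
     forall (n : nat) (B : pred (seq (arrow N))),
       prob_fdd p n x (fun ys => B (map (acomp (ainv x)) ys))
       = prob_fdd p n (unit_arrow (atgt x)) B)
  /\
  (* (ii) *)
  (forall w1 w2 : arrow N, is_arrow w1 -> is_arrow w2 -> w1 <> w2 ->
     (exists t : seq (arrow N), pos_path p (w1 :: t) /\ last w1 t = w2)
     <-> (exists i : 'I_N, asrc w1 = i /\ asrc w2 = i))
  /\
  (* (iii) : v = w1 :: t is v_1, ..., v_{n'}; v_n = nth w1 v n.-1 *)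
  (forall (w1 w2 : arrow N) (t : seq (arrow N)),
     w1 <> w2 -> pos_path p (w1 :: t) -> last w1 t = w2 ->
     let gs := (acomp (ainv w1) w2).2 in
     let d := size gs in
     (1 <= d)%N /\
     exists ns : seq nat,
       size ns = d.-1 /\
       path ltn 1%N (rcons ns (size (w1 :: t))) /\
       forall m : nat, (m < d.-1)%N ->
         nth w1 (w1 :: t) (nth 0%N ns m).-1
         = acomp w1 (atgt w1, take m.+1 gs)).
Proof.
have hp' : forall g : gen N, is_gen g -> (0 < p g)%R by move=> g /hp /andP [].
split; first exact: part1.
split; first by move=> w1 w2 H1 H2 Hne; apply: part2.
move=> w1 w2 t Hne /andP [Hall Hp] Hl gs d.
have Hw1 : is_arrow w1 by case/andP: Hall.
have Hsrc := path_src Hp.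
have HP : all (fun z => is_arrow z && (z.1 == w1.1)) (w1 :: t).
  apply/allP => z Hz; rewrite (allP Hall z Hz) /=.
  by apply/eqP; apply: (Hsrc z Hz).
have Hw2 : w2 \in w1 :: t by rewrite -Hl mem_last.
have /andP [Hw2a /eqP Hw2s] := allP HP w2 Hw2.
set phi := acomp (ainv w1).
have Hphi1 : phi w1 = (atgt w1, [::]) by rewrite /phi phi_self.
have Hphi2 : phi w2 = (atgt w1, gs) by rewrite /gs /phi phiE.
have [Hw2' _] := phi_arrow Hw1 Hw2a Hw2s.
have HgsR : red_from (atgt w1) None gs by move: Hw2'; rewrite -/phi Hphi2.
have Hd : (0 < size gs)%N.
  rewrite lt0n size_eq0; apply/eqP => E.
  apply: Hne; apply: (phi_inj Hw1 Hw1 Hw2a) => //.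
  by rewrite -/phi Hphi1 Hphi2 E.
split=> //.
have Hp' := path_phi Hw1 HP Hp.
rewrite -/phi Hphi1 in Hp'.
have Hall' : all (@is_arrow N) ((atgt w1, [::]) :: map phi t).
  rewrite -Hphi1 -map_cons; apply/allP => z /mapP [y Hy ->].
  by have /andP [Hya /eqP Hys] := allP HP y Hy; have [] := phi_arrow Hw1 Hya Hys.
have Hl' : last (atgt w1, [::]) (map phi t) = (atgt w1, gs).
  by rewrite -Hphi1 last_map Hl Hphi2.
have [ns [Hns1 [Hns2 Hns3]]] := core Hd Hall' Hp' Hl'.
exists ns; split=> //; split=> //.
  by move: Hns2; rewrite size_map.
move=> m Hm.
have [Hj Hnth] := Hns3 m Hm.
rewrite size_map in Hj.
have HT : red_from (atgt w1) None (take m.+1 gs).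
  by have := @prefix_arrow N (atgt w1) gs m.+1 HgsR.
have [Ha1 Ha2 Ha3] := phi_acomp Hw1 HT.
have Hmem : nth w1 (w1 :: t) (nth 0%N ns m).-1 \in w1 :: t by apply: mem_nth.
have /andP [Hna /eqP Hns] := allP HP _ Hmem.
apply: (phi_inj Hw1 Hna Ha1 Hns Ha2).
rewrite Ha3 -Hnth -Hphi1 -map_cons.
by rewrite (nth_map w1).
Qed.
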